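(* Let $X$ be a metric space, $\alpha\in\mathbb R$, and $\varphi\colon(0,\infty)\to[0,\infty)$ a function such that $\epsilon_{X;p}(S)\le\varphi(S)\,S^{\alpha/p}$ for all $p\in[1,\infty)$ and all $S>0$. Then for every $p\in[1,\infty)$ and every $S\ge e^p$, $$\epsilon_{X;p}(S)\le \frac{e^\alpha}{p}\,\varphi(S)\log S.$$
   Context: For a metric space $(X,d)$ and $1\le p<\infty$, $\ell^p(X)$ is the space of $p$-summable real functions on $X$ and $\ell^p_1(X)$ its unit sphere. For a map $\xi\colon X\to\ell^p(X)$, written $x\mapsto\xi_x$, put $S(\xi)=\sup\{d(x,y):\xi_x(y)\neq0\}$ and $\varepsilon(\xi;p)=\sup_{x\ne y}\|\xi_x-\xi_y\|_p/d(x,y)$. The profile is $\epsilon_{X;p}(S)=\inf\{\varepsilon(\xi;p):\xi\colon X\to\ell^p_1(X),\ S(\xi)\le S\}$. *)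

(* Defs.v *)
From HB Require Import structures.
From mathcomp Require Import all_boot all_order all_algebra.
From mathcomp Require Import all_classical all_reals all_analysis.
Set Implicit Arguments. Unset Strict Implicit. Unset Printing Implicit Defensive.
Import Order.TTheory GRing.Theory Num.Theory.
Local Open Scope classical_set_scope.
Local Open Scope ring_scope.

Definition is_metric (R : realType) (T : choiceType) (d : T -> T -> R) : Prop :=
  (forall x y, 0 <= d x y) /\ (forall x y, d x y = 0 <-> x = y) /\
  (forall x y, d x y = d y x) /\ (forall x y z, d x z <= d x y + d y z).

(* the l^p norm ( sum_{y in X} |f y|^p )^(1/p), an extended real (+oo iff f not p-summable);
   the sum over the arbitrary set X is the unordered sum esum *)
Definition lpnorm (R : realType) (T : choiceType) (p : R) (f : T -> R) : \bar R :=
  poweR (\esum_(y in [set: T]) ((`|f y| `^ p)%:E))%E (p^-1).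

Definition in_unit_sphere (R : realType) (T : choiceType) (p : R) (f : T -> R) : Prop :=
  lpnorm p f = 1%E.

Definition propag (R : realType) (T : choiceType) (d : T -> T -> R) (xi : T -> T -> R) : \bar R :=
  ereal_sup [set e | exists x y, xi x y != 0 /\ e = (d x y)%:E].

Definition epsxi (R : realType) (T : choiceType) (d : T -> T -> R) (p : R) (xi : T -> T -> R)
  : \bar R :=
  ereal_sup [set e | exists x y, x <> y /\
               e = (lpnorm p (fun z => (xi x z - xi y z)%R) * ((d x y)^-1)%:E)%E].

Definition profile (R : realType) (T : choiceType) (d : T -> T -> R) (p S : R) : \bar R :=
  ereal_inf [set epsxi d p xi | xi in
     [set xi : T -> T -> R | (forall x, in_unit_sphere p (xi x)) /\ (propag d xi <= S%:E)%E]].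

(* Main.v *)
Require Import Defs.
From HB Require Import structures.
From mathcomp Require Import all_boot all_order all_algebra.
From mathcomp Require Import all_classical all_reals all_analysis.
From mathcomp Require Import ring lra.
Import Order.TTheory GRing.Theory Num.Theory.
Local Open Scope ring_scope.

Section RealIneq.
Context {R : realType}.
Implicit Types (x y u s X Y : R).

Lemma amgm X Y t : 0 <= X -> 0 <= Y -> 0 <= t -> t <= 1 ->
  X `^ t * Y `^ (1 - t) <= t * X + (1 - t) * Y.
Proof.
move=> X0 Y0 t0 t1.
have [->|tn0] := eqVneq t 0.
  by rewrite powRr0 subr0 powRr1 // mul0r add0r !mul1r.
have [->|tn1] := eqVneq t 1.
  by rewrite subrr powRr0 powRr1 // mulr1 mul1r mul0r addr0.
have tp : 0 < t by rewrite lt_neqAle eq_sym tn0.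
have tl : t < 1 by rewrite lt_neqAle tn1.
have t'p : 0 < 1 - t by rewrite subr_gt0.
have i1 : 0 < t^-1 by rewrite invr_gt0.
have i2 : 0 < (1 - t)^-1 by rewrite invr_gt0.
have := @conjugate_powR R (X `^ t) (Y `^ (1 - t)) t^-1 (1 - t)^-1
   (powR_ge0 _ _) (powR_ge0 _ _) i1 i2.
rewrite !invrK -!powRrM !mulfV ?gt_eqF // !powRr1 //.
rewrite addrC subrK => /(_ erefl).
by rewrite (mulrC t) (mulrC (1 - t)).
Qed.

Lemma bern1 u s : 0 <= u -> 0 <= s -> s <= 1 -> u `^ s <= 1 + s * (u - 1).
Proof.
move=> u0 s0 s1; have := @amgm u 1 s u0 ler01 s0 s1.
by rewrite powR1 mulr1 mulr1 => /le_trans; apply; lra.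
Qed.

Lemma bern2 u s : 0 <= u -> 1 <= s -> 1 + s * (u - 1) <= u `^ s.
Proof.
move=> u0 s1; have sp : 0 < s by lra.
have i1 : 0 <= s^-1 by rewrite invr_ge0 ltW.
have i2 : s^-1 <= 1 by rewrite invf_le1.
have := @bern1 (u `^ s) s^-1 (powR_ge0 _ _) i1 i2.
rewrite -powRrM mulfV ?gt_eqF // powRr1 // => h.
have : s * u <= s * (1 + s^-1 * (u `^ s - 1)) by rewrite ler_pM2l.
rewrite mulrDr mulr1 mulrA mulfV ?gt_eqF // mul1r; lra.
Qed.


Lemma jensen2 X Y k : 0 <= X -> 0 <= Y -> 1 <= k ->
  ((X + Y) / 2) `^ k <= (X `^ k + Y `^ k) / 2.
Proof.
move=> X0 Y0 k1; set m := (X + Y) / 2.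
have m0 : 0 <= m by rewrite /m; lra.
have [mz|mp] := eqVneq m 0.
  rewrite mz powR0; last by apply/eqP => k0; move: k1; rewrite k0; lra.
  by apply: divr_ge0 => //; apply: addr_ge0; apply: powR_ge0.
have mg : 0 < m by rewrite lt_neqAle eq_sym mp.
have eX : X = m * (X / m) by rewrite mulrC divfK.
have eY : Y = m * (Y / m) by rewrite mulrC divfK.
have Xm : 0 <= X / m by apply: divr_ge0.
have Ym : 0 <= Y / m by apply: divr_ge0.
have b1 := @bern2 _ _ Xm k1; have b2 := @bern2 _ _ Ym k1.
have h : X / m + Y / m = 2 by rewrite /m; field; apply/eqP; rewrite /m in mp; lra.
have h2 : 2 <= (X / m) `^ k + (Y / m) `^ k.
  have e : k * (X / m - 1) + k * (Y / m - 1) = k * (X / m + Y / m - 2) by ring.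
  rewrite h subrr mulr0 in e.
  lra.
rewrite [in X `^ k]eX [in Y `^ k]eY (powRM k m0 Xm) (powRM k m0 Ym).
have := ler_wpM2l (powR_ge0 m k) h2; rewrite mulrDr; lra.
Qed.

Lemma mono_up (g gd : R -> R) (y x : R) : 0 < y -> y <= x ->
  (forall z : R, 0 < z -> is_derive z 1 g (gd z)) ->
  (forall z : R, y < z -> z < x -> 0 <= gd z) -> g y <= g x.
Proof.
move=> y0 yx D P.
apply: (@ger0_derive1_ndecr _ g y x) => //.
- move=> z; rewrite in_itv/= => /andP[yz _].
  by have [] := D z (lt_trans y0 yz).
- move=> z; rewrite in_itv/= => /andP[yz zx].
  by rewrite derive1E (@derive_val _ _ _ _ _ _ _ (D z (lt_trans y0 yz))); apply: P.
- apply: derivable_within_continuous => z; rewrite in_itv/= => /andP[yz _].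
  by have [] := D z (lt_le_trans y0 yz).
Qed.


Lemma powR_split (z s : R) : 0 < z -> z `^ s = z * z `^ (s - 1).
Proof.
move=> z0.
have h : z `^ (s - 1 + 1) = z `^ (s - 1) * z `^ 1.
  by apply: powRD; rewrite (gt_eqF z0) implybT.
by move: h; rewrite subrK powRr1 ?(ltW z0) // mulrC.
Qed.

Lemma powR_div (x z s : R) : 0 <= x -> 0 < z -> (x / z) `^ s = x `^ s / z `^ s.
Proof.
move=> x0 z0; rewrite powRM //; last by rewrite invr_ge0 ltW.
by rewrite -powR_inv1 ?(ltW z0) // -powRrM mulN1r powRN.
Qed.

Lemma k2 (x y r : R) : 2 <= r -> 0 <= y -> y <= x ->
  x `^ r - y `^ r <= r / 2 * (x - y) * (x `^ (r - 1) + y `^ (r - 1)).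
Proof.
move=> r2 y0 yx.
have r0 : 0 < r by lra.
have s0 : r - 1 != 0 by apply/eqP; lra.
have [->|yp] := eqVneq y 0.
  rewrite powR0 ?gt_eqF // powR0 // subr0 subr0 addr0.
  have x0 : 0 <= x by apply: le_trans yx.
  rewrite -(mulr_powRB1 x0 r0).
  have := mulr_ge0 x0 (powR_ge0 x (r - 1)).
  have : 1 <= r / 2 by rewrite ler_pdivlMr //; lra.
  nra.
have yg : 0 < y by rewrite lt_neqAle eq_sym yp.
have := @mono_up
  (fun z : R => x `^ r - z `^ r - r / 2 * (x - z) * (x `^ (r - 1) + z `^ (r - 1)))
  (fun z : R => - (r * z `^ (r - 1)) - (r / 2 * (0 - 1) * (x `^ (r - 1) + z `^ (r - 1))
   + r / 2 * (x - z) * ((r - 1) * z `^ (r - 1 - 1)))) y x yg yx.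
rewrite !subrr mulr0 mul0r subrr => H.
suff : x `^ r - y `^ r - r / 2 * (x - y) * (x `^ (r - 1) + y `^ (r - 1)) <= 0 by lra.
apply: H.
  move=> z z0.
  have P1 := @is_derive1_powR R r z z0.
  have P2 := @is_derive1_powR R (r - 1) z z0.
  by apply: is_derive_eq; rewrite /GRing.scale/=; ring.
move=> z yz zx.
have z0 : 0 < z by apply: lt_trans yz.
rewrite /=.
have x0 : 0 <= x by apply: (le_trans y0); apply: ltW; apply: lt_trans zx.
have xz0 : 0 <= x / z by apply: divr_ge0 => //; apply: ltW.
have s1 : 1 <= r - 1 by lra.
have b := @bern2 (x / z) (r - 1) xz0 s1.
have e1 : z `^ (r - 1) = z * z `^ (r - 1 - 1).
  exact: powR_split.
have e2 : (x / z) `^ (r - 1) = x `^ (r - 1) / z `^ (r - 1).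
  exact: powR_div.
have Bp : 0 < z `^ (r - 1) by apply: powR_gt0.
rewrite e2 ler_pdivlMr // in b.
have h2 : (x / z - 1) * z `^ (r - 1) = (x - z) * z `^ (r - 1 - 1).
  by rewrite e1; field; rewrite gt_eqF.
have h3 : 0 <= x `^ (r - 1) - z `^ (r - 1) - (r - 1) * ((x - z) * z `^ (r - 1 - 1)).
  rewrite -h2. move: b. set B := z `^ (r - 1). nra.
have := mulr_ge0 (ltW r0) h3.
lra.
Qed.



Lemma k1 (x y r : R) : 1 <= r -> r <= 2 -> 0 <= y -> y <= x ->
  x `^ r - y `^ r <= r * (x - y) * ((x + y) / 2) `^ (r - 1).
Proof.
move=> r1 r2 y0 yx.
have r0 : 0 < r by lra.
have x0 : 0 <= x by apply: le_trans yx.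
have s0 : 0 <= r - 1 by lra.
have s1 : r - 1 <= 1 by lra.
have [->|yp] := eqVneq y 0.
  rewrite powR0 ?gt_eqF // !subr0 addr0.
  have h2 : 0 <= x / 2 by lra.
  have ex : x `^ (r - 1) = 2 `^ (r - 1) * (x / 2) `^ (r - 1).
    by rewrite -powRM //; congr (_ `^ _); field.
  rewrite -(mulr_powRB1 x0 r0) ex.
  have b := @bern1 2 (r - 1) (ler0n _ 2) s0 s1.
  have hT : 2 `^ (r - 1) <= r by lra.
  have := ler_wpM2r (mulr_ge0 x0 (powR_ge0 (x / 2) (r - 1))) hT.
  lra.
have yg : 0 < y by rewrite lt_neqAle eq_sym yp.
have := @mono_up
  (fun z : R => x `^ r - z `^ r - r * (x - z) * (((@powR R ^~ (r - 1)) \o (fun t : R => (x + t) / 2)) z))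
  (fun z : R => - (r * z `^ (r - 1)) - (r * (0 - 1) * ((x + z) / 2) `^ (r - 1)
   + r * (x - z) * ((r - 1) * ((x + z) / 2) `^ (r - 1 - 1) * 2^-1))) y x yg yx.
rewrite /= !subrr mulr0 mul0r subrr => H.
suff : x `^ r - y `^ r - r * (x - y) * ((x + y) / 2) `^ (r - 1) <= 0 by lra.
apply: H.
  move=> z z0.
  have P1 := @is_derive1_powR R r z z0.
  have m0 : 0 < (x + z) / 2 by lra.
  have P2 := @is_derive1_powR R (r - 1) _ m0.
  have Hh : is_derive z 1 (fun t : R => (x + t) / 2) 2^-1.
    by apply: is_derive_eq; rewrite /GRing.scale/=; ring.
  have C := @is_derive1_comp R (@powR R ^~ (r - 1)) (fun t : R => (x + t) / 2) z _ _ P2 Hh.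
  by apply: is_derive_eq; rewrite /GRing.scale/=; ring.
move=> z yz zx /=.
have z0 : 0 < z by apply: lt_trans yz.
set m := (x + z) / 2.
have mg : 0 < m by rewrite /m; lra.
have zm0 : 0 <= z / m by apply: divr_ge0 => //; apply: ltW.
have b := @bern1 (z / m) (r - 1) zm0 s0 s1.
have e1 : m `^ (r - 1) = m * m `^ (r - 1 - 1).
  exact: powR_split.
have e2 : (z / m) `^ (r - 1) = z `^ (r - 1) / m `^ (r - 1).
  by apply: powR_div => //; apply: ltW.
have Bp : 0 < m `^ (r - 1) by apply: powR_gt0.
rewrite e2 ler_pdivrMr // in b.
have h2 : (z / m - 1) * m `^ (r - 1) = (z - m) * m `^ (r - 1 - 1).
  by rewrite e1; field; rewrite gt_eqF.
have h3 : 0 <= m `^ (r - 1) - z `^ (r - 1) - (r - 1) * ((m - z) * m `^ (r - 1 - 1)).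
  have h4 : (m - z) * m `^ (r - 1 - 1) = - ((z - m) * m `^ (r - 1 - 1)) by ring.
  rewrite h4 -h2. move: b. set B := m `^ (r - 1). nra.
have hx : x - z = 2 * (m - z) by rewrite /m; field.
rewrite hx.
have := mulr_ge0 (ltW r0) h3.
lra.
Qed.


Lemma powR_mono u v s : 0 <= s -> 0 <= u -> u <= v -> u `^ s <= v `^ s.
Proof.
move=> s0 u0 uv; apply: ge0_ler_powR => //; rewrite nnegrE //; exact: le_trans uv.
Qed.

Lemma ss_sym (Wf : R -> R -> R) (x y r : R) : 0 <= x -> 0 <= y -> 0 < r ->
  (forall u v, Wf u v = Wf v u) ->
  (forall u v, 0 <= v -> v <= u -> u `^ r - v `^ r <= r * (u - v) * Wf u v) ->
  `|x `^ r - y `^ r| <= r * `|x - y| * Wf x y.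
Proof.
move=> x0 y0 r0 Ws H.
have [yx|xy] := leP y x.
  rewrite !ger0_norm ?subr_ge0 //; first exact: H.
  exact: powR_mono (ltW r0) y0 yx.
rewrite Ws distrC (distrC x) !ger0_norm ?subr_ge0 ?(ltW xy) //; first exact: H (ltW xy).
exact: powR_mono (ltW r0) x0 (ltW xy).
Qed.

Lemma ss_os (x y r q : R) : 1 <= r -> r <= q -> 0 <= x -> 0 <= y ->
  exists V, [/\ 0 <= V, V `^ q <= (x `^ q + y `^ q) / 2,
     `|x `^ r - y `^ r| <= r * `|x - y| * V `^ (r - 1) &
     x `^ r + y `^ r <= r * (x + y) * V `^ (r - 1)].
Proof.
move=> r1 rq x0 y0.
have r0 : 0 < r by lra.
have s0 : 0 <= r - 1 by lra.
have [r2|r2] := leP r 2.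
  exists ((x + y) / 2); split.
  - lra.
  - by apply: jensen2 => //; lra.
  - apply: (@ss_sym (fun u v => ((u + v) / 2) `^ (r - 1))) => //.
      by move=> u v; rewrite addrC.
    by move=> u v v0 vu; apply: k1.
  have s1 : r - 1 <= 1 by lra.
  have xy0 : 0 <= x + y by lra.
  have b := @bern1 2 (r - 1) (ler0n _ 2) s0 s1.
  have hx : x `^ r <= x * (x + y) `^ (r - 1).
    rewrite -(mulr_powRB1 x0 r0); apply: ler_wpM2l => //.
    by apply: powR_mono => //; lra.
  have hy : y `^ r <= y * (x + y) `^ (r - 1).
    rewrite -(mulr_powRB1 y0 r0); apply: ler_wpM2l => //.
    by apply: powR_mono => //; lra.
  have e : (x + y) `^ (r - 1) = 2 `^ (r - 1) * ((x + y) / 2) `^ (r - 1).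
    rewrite -powRM //; last by lra.
    by congr (_ `^ _); field.
  have := powR_ge0 ((x + y) / 2) (r - 1).
  rewrite e in hx hy.
  move=> P0.
  have hT : 2 `^ (r - 1) <= r by lra.
  have := ler_wpM2l (mulr_ge0 xy0 P0) hT.
  lra.
have s1 : 1 <= r - 1 by lra.
have sp : 0 < r - 1 by lra.
set W := (x `^ (r - 1) + y `^ (r - 1)) / 2.
have W0 : 0 <= W by rewrite /W; have := powR_ge0 x (r - 1); have := powR_ge0 y (r - 1); lra.
have VW : (W `^ (r - 1)^-1) `^ (r - 1) = W.
  by rewrite -powRrM mulVf ?gt_eqF // powRr1.
exists (W `^ (r - 1)^-1); split.
- exact: powR_ge0.
- rewrite -powRrM /W.
  have k1' : 1 <= (r - 1)^-1 * q.
    by rewrite ler_pdivlMl // mulr1; lra.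
  apply: (le_trans (@jensen2 (x `^ (r - 1)) (y `^ (r - 1)) _ (powR_ge0 _ _) (powR_ge0 _ _) k1')).
  by rewrite -!powRrM !mulrA mulfV ?gt_eqF // !mul1r.
- rewrite VW /W.
  apply: (@ss_sym (fun u v => (u `^ (r - 1) + v `^ (r - 1)) / 2)) => //.
    by move=> u v; rewrite addrC.
  move=> u v v0 vu; have := @k2 u v r (ltW r2) v0 vu; lra.
rewrite VW /W.
have hx : x `^ r <= (x + y) * x `^ (r - 1).
  rewrite -(mulr_powRB1 x0 r0); apply: ler_wpM2r; [exact: powR_ge0 | lra].
have hy : y `^ r <= (x + y) * y `^ (r - 1).
  rewrite -(mulr_powRB1 y0 r0); apply: ler_wpM2r; [exact: powR_ge0 | lra].
have := mulr_ge0 (addr_ge0 x0 y0) (addr_ge0 (powR_ge0 x (r - 1)) (powR_ge0 y (r - 1))).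
move=> H0.
have hr : 1 <= r / 2 by rewrite ler_pdivlMr //; lra.
have := ler_wpM2l H0 hr.
lra.
Qed.


Definition mz (r a : R) := Num.sg a * `|a| `^ r.

Lemma mz_pos r a : 0 < r -> 0 <= a -> mz r a = `|a| `^ r.
Proof.
move=> r0 a0; rewrite /mz; have [->|ap] := eqVneq a 0.
  by rewrite sgr0 normr0 powR0 ?gt_eqF // mul0r.
by rewrite gtr0_sg ?mul1r // lt_neqAle eq_sym ap.
Qed.

Lemma mz_neg r a : 0 < r -> a <= 0 -> mz r a = - `|a| `^ r.
Proof.
move=> r0 a0; rewrite /mz; have [->|ap] := eqVneq a 0.
  by rewrite sgr0 normr0 powR0 ?gt_eqF // mul0r oppr0.
by rewrite ltr0_sg ?mulN1r // lt_neqAle ap.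
Qed.

Lemma pw (a b r q : R) : 1 <= r -> r <= q ->
  exists V, [/\ 0 <= V, V `^ q <= (`|a| `^ q + `|b| `^ q) / 2 &
     `|mz r a - mz r b| <= r * `|a - b| * V `^ (r - 1)].
Proof.
move=> r1 rq.
have r0 : 0 < r by lra.
have [V [V0 Vq SS OS]] := @ss_os `|a| `|b| r q r1 rq (normr_ge0 a) (normr_ge0 b).
exists V; split => //.
have n1 : `| `|a| `^ r + `|b| `^ r| = `|a| `^ r + `|b| `^ r.
  by apply: ger0_norm; apply: addr_ge0; exact: powR_ge0.
have n2 : `| `|a| + `|b| | = `|a| + `|b|.
  by apply: ger0_norm; apply: addr_ge0.
have [a0|a0] := leP 0 a; have [b0|b0] := leP 0 b.
- rewrite !mz_pos //.
  have -> : a - b = `|a| - `|b| by rewrite !ger0_norm.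
  exact: SS.
- rewrite mz_pos // mz_neg //; last exact: ltW.
  have -> : a - b = `|a| + `|b| by rewrite (ger0_norm a0) (ltr0_norm b0).
  by rewrite opprK n1 n2.
- rewrite mz_neg ?(ltW a0) // mz_pos //.
  have -> : a - b = - (`|a| + `|b|) by rewrite (ger0_norm b0) (ltr0_norm a0) opprD opprK.
  by rewrite -opprD !normrN n1 n2.
- rewrite !mz_neg ?(ltW a0) ?(ltW b0) //.
  have -> : a - b = - (`|a| - `|b|) by rewrite !ltr0_norm //; ring.
  by rewrite normrN opprK addrC distrC.
Qed.


Lemma pwY (a b r p l : R) : 1 <= r -> 1 <= p -> 0 < l ->
  `|mz r a - mz r b| `^ p <= (r * l) `^ p *
     (r^-1 * (`|a - b| / l) `^ (r * p) + (1 - r^-1) * ((`|a| `^ (r * p) + `|b| `^ (r * p)) / 2)).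
Proof.
move=> r1 p1 l0.
have r0 : 0 < r by lra.
have p0 : 0 < p by lra.
have rq : r <= r * p by rewrite -{1}(mulr1 r) ler_pM2l.
have [V [V0 Vq H]] := @pw a b r (r * p) r1 rq.
have c0 : 0 <= `|a - b| / l by apply: divr_ge0 => //; apply: ltW.
have rl0 : 0 <= r * l by apply: mulr_ge0; apply: ltW.
have t0 : 0 <= r^-1 by rewrite invr_ge0 ltW.
have t1 : r^-1 <= 1 by rewrite invf_le1.
have := @amgm ((`|a - b| / l) `^ (r * p)) (V `^ (r * p)) r^-1 (powR_ge0 _ _) (powR_ge0 _ _) t0 t1.
rewrite -!powRrM.
have e1 : r * p * r^-1 = p by rewrite mulrAC mulfV ?gt_eqF // mul1r.
have e2 : r * p * (1 - r^-1) = (r - 1) * p.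
  by rewrite mulrBr mulr1 e1; ring.
rewrite e1 e2 => Y.
have Hp := @powR_mono _ _ p (ltW p0) (normr_ge0 _) H.
apply: (le_trans Hp).
have -> : r * `|a - b| * V `^ (r - 1) = (r * l) * (`|a - b| / l * V `^ (r - 1)).
  by field; rewrite gt_eqF.
rewrite (powRM _ rl0); last by apply: mulr_ge0 => //; apply: powR_ge0.
apply: ler_wpM2l; first exact: powR_ge0.
rewrite (powRM _ c0 (powR_ge0 _ _)) -powRrM.
apply: (le_trans Y).
apply: lerD => //.
by apply: ler_wpM2l => //; rewrite subr_ge0.
Qed.

End RealIneq.

Section Esum.
Context {R : realType} {T : choiceType}.
Local Open Scope ereal_scope.

Lemma esumZ (c : R) (a : T -> \bar R) : (0 <= c)%R -> (forall i, 0 <= a i) ->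
  \esum_(i in [set: T]) (c%:E * a i) = c%:E * \esum_(i in [set: T]) a i.
Proof.
move=> c0 a0; rewrite /esum -ereal_supZl //; last first.
  by apply/set0P; exists 0; exists set0; [exact: fsets_set0 | rewrite fsbig_set0].
congr ereal_sup; apply/seteqP; split => x /=.
  move=> [X [finX _] <-]; exists (\sum_(i \in X) a i); first by exists X.
  by rewrite !fsbig_finite // ge0_sume_distrr.
move=> [y [X [finX XT] <-] <-]; exists X => //.
by rewrite !fsbig_finite // ge0_sume_distrr.
Qed.


Lemma term_le_esum (a : T -> \bar R) i : (forall j, 0 <= a j) ->
  a i <= \esum_(j in [set: T]) a j.
Proof.
move=> a0; apply: esum_ge; exists [set i]%classic; first by split => //; exact: finite_set1.
by rewrite fsbig_set1.
Qed.

Lemma lp_mazur (f g : T -> R) (r p : R) : (1 <= r)%R -> (1 <= p)%R ->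
  \esum_(y in [set: T]) (`|f y| `^ (r * p))%:E = 1 ->
  \esum_(y in [set: T]) (`|g y| `^ (r * p))%:E = 1 ->
  lpnorm p (fun z => (mz r (f z) - mz r (g z))%R) <=
    r%:E * lpnorm (r * p) (fun z => (f z - g z)%R).
Proof.
move=> r1 p1 Sf Sg.
have r0 : (0 < r)%R by lra.
have p0 : (0 < p)%R by lra.
have q0 : (0 < r * p)%R by apply: mulr_gt0.
rewrite /lpnorm.
set D := \esum_(y in [set: T]) (`|f y - g y| `^ (r * p))%:E.
have D0 : 0 <= D by apply: esum_ge0 => i _; rewrite lee_fin powR_ge0.
have [Dfin|Dinf] := boolP (D \is a fin_num); last first.
  have -> : D = +oo.
    by move/fin_numPn: Dinf => [Dn|//]; move: D0; rewrite Dn.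
  rewrite poweRyr ?invr_neq0 ?gt_eqF // muleC gt0_mulye ?lte_fin //.
  exact: leey.
have Dd : D = (fine D)%:E by rewrite fineK.
set d := fine D.
have d0 : (0 <= d)%R by rewrite -lee_fin -Dd.
have [dz|dp] := eqVneq d 0%R.
  rewrite esum1; last first.
    move=> i _.
    have hi := @term_le_esum (fun y => (`|f y - g y| `^ (r * p))%:E) i
                 (fun j => powR_ge0 _ _).
    rewrite -/D Dd -/d dz lee_fin in hi.
    have : (`|f i - g i| `^ (r * p) = 0)%R by apply/le_anti; rewrite hi powR_ge0.
    move/powR_eq0_eq0/eqP; rewrite normr_eq0 subr_eq0 => /eqP ->.
    by rewrite subrr normr0 powR0 ?gt_eqF.
  rewrite poweR0r ?invr_neq0 ?gt_eqF //.
  by apply: mule_ge0; [rewrite lee_fin ltW | apply: poweR_ge0].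
have dg : (0 < d)%R by rewrite lt_neqAle eq_sym dp.
set l := (d `^ (r * p)^-1)%R.
have l0 : (0 < l)%R by apply: powR_gt0.
have lq : (l `^ (r * p) = d)%R.
  by rewrite /l -powRrM mulVf ?gt_eqF // powRr1.
have ex : forall u, (0 <= u)%R -> ((u / l) `^ (r * p) = d^-1 * u `^ (r * p))%R.
  move=> u u0.
  have e : (u `^ (r * p) = (u / l) `^ (r * p) * d)%R.
    rewrite -lq -powRM; last exact: ltW.
      by rewrite divfK // gt_eqF.
    by apply: divr_ge0 => //; apply: ltW.
  by rewrite e mulrCA mulVf ?gt_eqF // mulr1.
set K := ((r * l) `^ p)%R.
have K0 : (0 <= K)%R by apply: powR_ge0.
have t0 : (0 <= r^-1)%R by rewrite invr_ge0 ltW.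
have t1 : (0 <= 1 - r^-1)%R by rewrite subr_ge0 invf_le1.
have HN : \esum_(y in [set: T]) (`|mz r (f y) - mz r (g y)| `^ p)%:E <= K%:E.
  apply: (@le_trans _ _ (\esum_(i in [set: T]) (((r * l) `^ p * (r^-1 * (`|f i - g i| / l) `^ (r * p) +
      (1 - r^-1) * ((`|f i| `^ (r * p) + `|g i| `^ (r * p)) / 2)))%R)%:E)).
    by apply: le_esum => i _; rewrite lee_fin; exact: (@pwY _ (f i) (g i) r p l r1 p1 l0).
  under eq_esum => i _ do rewrite ex ?normr_ge0 //.
  have -> : \esum_(i in [set: T]) ((r * l) `^ p *
      (r^-1 * (d^-1 * `|f i - g i| `^ (r * p)) +
       (1 - r^-1) * ((`|f i| `^ (r * p) + `|g i| `^ (r * p)) / 2)))%:E =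
    \esum_(i in [set: T]) ((K * r^-1 * d^-1)%:E * (`|f i - g i| `^ (r * p))%:E +
       ((K * (1 - r^-1) / 2)%:E * (`|f i| `^ (r * p))%:E +
        (K * (1 - r^-1) / 2)%:E * (`|g i| `^ (r * p))%:E)).
    by apply: eq_esum => i _; rewrite -!EFinM -!EFinD /K; congr EFin; ring.
  have c1 : (0 <= K * r^-1 * d^-1)%R by rewrite !mulr_ge0 // invr_ge0.
  have c2 : (0 <= K * (1 - r^-1) / 2)%R by rewrite !mulr_ge0.
  rewrite esumD; last 2 first.
  - by move=> i _; apply: mule_ge0; rewrite lee_fin // powR_ge0.
  - by move=> i _; apply: adde_ge0; apply: mule_ge0; rewrite lee_fin // powR_ge0.
  rewrite esumD; last 2 first.
  - by move=> i _; apply: mule_ge0; rewrite lee_fin // powR_ge0.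
  - by move=> i _; apply: mule_ge0; rewrite lee_fin // powR_ge0.
  rewrite !esumZ //; try by move=> i; rewrite lee_fin powR_ge0.
  rewrite -/D Sf Sg Dd -/d !mule1 -!EFinM -!EFinD lee_fin.
  rewrite le_eqVlt; apply/orP; left; apply/eqP.
  by field; rewrite gt_eqF.
have ip : (0 <= p^-1)%R by rewrite invr_ge0 ltW.
have N0 : 0 <= \esum_(y in [set: T]) (`|mz r (f y) - mz r (g y)| `^ p)%:E.
  by apply: esum_ge0 => i _; rewrite lee_fin powR_ge0.
apply: (le_trans (gt0_ler_poweR ip _ _ HN)).
- by rewrite in_itv /= N0 leey.
- by rewrite in_itv /= lee_fin K0 leey.
rewrite Dd -/d !poweR_EFin -/l -EFinM lee_fin /K -powRrM mulfV ?gt_eqF // powRr1 //.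
by apply: mulr_ge0; apply: ltW.
Qed.

End Esum.


Section Main.
Context {R : realType} {T : choiceType} (d : T -> T -> R).
Local Open Scope ereal_scope.

Lemma unit_sum (p : R) (f : T -> R) : (0 < p)%R -> in_unit_sphere p f ->
  \esum_(y in [set: T]) (`|f y| `^ p)%:E = 1.
Proof.
move=> p0; rewrite /in_unit_sphere /lpnorm => H.
have A0 : 0 <= \esum_(y in [set: T]) (`|f y| `^ p)%:E.
  by apply: esum_ge0 => i _; rewrite lee_fin powR_ge0.
have e : (p^-1 * p = 1)%R by rewrite mulVf // gt_eqF.
transitivity (((\esum_(y in [set: T]) (`|f y| `^ p)%:E) `^ p^-1) `^ p).
  by rewrite -poweRrM e poweRe1.
by rewrite H poweR1r.
Qed.

Lemma norm_mz (r a : R) : (0 < r)%R -> (`|mz r a| = `|a| `^ r)%R.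
Proof.
move=> r0; have [a0|a0] := leP 0%R a.
  by rewrite mz_pos // ger0_norm // powR_ge0.
by rewrite mz_neg ?(ltW a0) // normrN ger0_norm // powR_ge0.
Qed.

Lemma eta_unit (r p : R) (f : T -> R) : (1 <= r)%R -> (0 < p)%R ->
  \esum_(y in [set: T]) (`|f y| `^ (r * p))%:E = 1 ->
  in_unit_sphere p (fun z => mz r (f z)).
Proof.
move=> r1 p0 H; have r0 : (0 < r)%R by lra.
rewrite /in_unit_sphere /lpnorm.
under eq_esum => i _ do rewrite norm_mz // -powRrM.
by rewrite H poweR1r.
Qed.

Lemma propag_eq (r : R) (xi : T -> T -> R) : (0 < r)%R ->
  propag d (fun x y => mz r (xi x y)) = propag d xi.
Proof.
move=> r0; rewrite /propag; congr ereal_sup; apply/seteqP; split => e /=.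
  move=> [x [y [h ->]]]; exists x, y; split => //.
  by move: h; rewrite -normr_eq0 norm_mz // powR_eq0 (gt_eqF r0) /= andbT normr_eq0.
move=> [x [y [h ->]]]; exists x, y; split => //.
by rewrite -normr_eq0 norm_mz // powR_eq0 (gt_eqF r0) /= andbT normr_eq0.
Qed.

Lemma epsxi_le (r p : R) (xi : T -> T -> R) : (1 <= r)%R -> (1 <= p)%R ->
  (forall x, in_unit_sphere (r * p) (xi x)) -> (forall x y, (0 <= d x y)%R) ->
  epsxi d p (fun x y => mz r (xi x y)) <= r%:E * epsxi d (r * p) xi.
Proof.
move=> r1 p1 Hu d0.
have r0 : (0 < r)%R by lra.
have q0 : (0 < r * p)%R by apply: mulr_gt0; lra.
apply: ge_ereal_sup => _ [x [y [xy ->]]].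
have H := @lp_mazur _ _ (xi x) (xi y) r p r1 p1 (@unit_sum (r * p) (xi x) q0 (Hu x)) (@unit_sum (r * p) (xi y) q0 (Hu y)).
have di : 0 <= ((d x y)^-1)%:E by rewrite lee_fin invr_ge0.
apply: (le_trans (lee_wpmul2r di H)).
rewrite -muleA; apply: lee_wpmul2l; first by rewrite lee_fin ltW.
by apply: ereal_sup_ubound; exists x, y.
Qed.

Lemma profile_le (r p S : R) : (1 <= r)%R -> (1 <= p)%R ->
  (forall x y, (0 <= d x y)%R) ->
  profile d p S <= r%:E * profile d (r * p) S.
Proof.
move=> r1 p1 d0.
have r0 : (0 < r)%R by lra.
have p0 : (0 < p)%R by lra.
rewrite -lee_pdivrMl //.
apply: le_ereal_inf_tmp => _ [xi [Hu Hpr] <-].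
rewrite lee_pdivrMl //.
apply: (le_trans _ (@epsxi_le r p xi r1 p1 Hu d0)).
apply: ereal_inf_lbound; exists (fun x y => mz r (xi x y)) => //; split.
- by move=> x; apply: eta_unit => //; apply: unit_sum => //; apply: mulr_gt0.
- by rewrite propag_eq.
Qed.

End Main.

Theorem lemma2p3p2 (R : realType) (T : choiceType) (d : T -> T -> R) (alpha : R)
  (phi : R -> R) :
  is_metric d ->
  (forall S, 0 < S -> 0 <= phi S) ->
  (forall p S, 1 <= p -> 0 < S ->
     (profile d p S <= (phi S * S `^ (alpha / p))%:E)%E) ->
  forall p S, 1 <= p -> expR p <= S ->
     (profile d p S <= (expR alpha / p * phi S * ln S)%:E)%E.
Proof.
move=> [d0 _] phi0 H p S p1 pS.
have p0 : 0 < p by lra.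
have S0 : 0 < S by apply: lt_le_trans pS; apply: expR_gt0.
have qp : p <= ln S by rewrite -(expRK p) ler_ln // posrE expR_gt0.
have q0 : 0 < ln S by lra.
set q := ln S.
set r := q / p.
have r1 : 1 <= r by rewrite /r ler_pdivlMr // mul1r.
have rp : r * p = q by rewrite /r divfK // gt_eqF.
have := @profile_le _ _ d r p S r1 p1 d0.
rewrite rp => Hp.
apply: (le_trans Hp).
have Hq := H q S (le_trans p1 qp) S0.
have eS : S `^ (alpha / q) = expR alpha.
  rewrite -{1}(lnK S0) -expRM /q mulrC divfK // gt_eqF //.
rewrite eS in Hq.
apply: (le_trans (lee_wpmul2l _ Hq)); first by rewrite lee_fin; apply: ltW; lra.
rewrite -EFinM lee_fin /r /q le_eqVlt; apply/orP; left; apply/eqP.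
by field; rewrite gt_eqF.
Qed.
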